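(* Let $J$ be the ideal of a non-trivial, non-minimal tetrahedral curve $(a_1,\dots,a_6)$, and let $J=L\cdot I+(F)$ be the basic double link obtained by reducing $J$ at a facet of maximal weight (with $L$, $F$ and $I$ as prescribed by that reduction). Set $e=\deg F$. Then the mapping cone resolution of $J$ obtained from the exact sequence $$0\to R(-e-1)\to I(-1)\oplus R(-e)\to J\to 0$$ (first map $C\mapsto (FC,LC)$, second map $(A,B)\mapsto LA-FB$), using the minimal free resolution of $I$, is a minimal free resolution if and only if $J$ is not, up to a permutation of the variables, the ideal of a curve $(0,r,r,r,r,0)$.
   Context: Let $k$ be a field, $R=k[a,b,c,d]$. The tetrahedral curve $(a_1,\dots,a_6)$ has ideal $(a,b)^{a_1}\cap(a,c)^{a_2}\cap(a,d)^{a_3}\cap(b,c)^{a_4}\cap(b,d)^{a_5}\cap(c,d)^{a_6}$; permuting variables permutes entries. Facets $\{a_1,a_2,a_3\},\{a_1,a_4,a_5\},\{a_2,a_4,a_6\},\{a_3,a_5,a_6\}$ with weight the sum of entries. With $a_i'=\max\{0,a_i-1\}$, the reductions: (A) if $a_1+a_2\ge a_4$, $a_1+a_3\ge a_5$, $a_2+a_3\ge a_6$: $L=a$, $F=b^{a_1}c^{a_2}d^{a_3}$, $I$ the ideal of $(a_1',a_2',a_3',a_4,a_5,a_6)$; (B) if $a_1+a_4\ge a_2$, $a_1+a_5\ge a_3$, $a_4+a_5\ge a_6$: $L=b$, $F=a^{a_1}c^{a_4}d^{a_5}$, $I$ of $(a_1',a_2,a_3,a_4',a_5',a_6)$; (C)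 if $a_2+a_4\ge a_1$, $a_2+a_6\ge a_3$, $a_4+a_6\ge a_5$: $L=c$, $F=a^{a_2}b^{a_4}d^{a_6}$, $I$ of $(a_1,a_2',a_3,a_4',a_5,a_6')$; (D) if $a_3+a_5\ge a_1$, $a_3+a_6\ge a_2$, $a_5+a_6\ge a_4$: $L=d$, $F=a^{a_3}b^{a_5}c^{a_6}$, $I$ of $(a_1,a_2,a_3',a_4,a_5',a_6')$; in each case $J=L\cdot I+(F)$. These are reductions at the facets $\{a_1,a_2,a_3\},\{a_1,a_4,a_5\},\{a_2,a_4,a_6\},\{a_3,a_5,a_6\}$ respectively. A non-arithmetically Cohen–Macaulay curve is minimal if no reduction applies; if a non-trivial curve is not minimal, a reduction at a facet of maximal weight exists. *)

(* Defs.v *)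
(* MathComp + multinomials (mpoly).  R = k[a,b,c,d] = {mpoly k[4]},
   with a = 'X_0, b = 'X_1, c = 'X_2, d = 'X_3. *)
From HB Require Import structures.
From mathcomp Require Import all_boot all_order all_algebra all_fingroup.
From mathcomp Require Import mpoly.
Set Implicit Arguments. Unset Strict Implicit. Unset Printing Implicit Defensive.
Import GRing.Theory.
Local Open Scope ring_scope.

Section Tetra.
Variable k : fieldType.
Local Notation R := {mpoly k[4]}.

Definition ideal_gen (S : R -> Prop) : R -> Prop :=
  fun p => exists (n : nat) (g c : 'I_n -> R),
    (forall i, S (g i)) /\ p = \sum_(i < n) c i * g i.

Definition ideal_mul (I1 I2 : R -> Prop) : R -> Prop :=
  ideal_gen (fun p => exists x y, I1 x /\ I2 y /\ p = x * y).

Definition ideal_pow (I : R -> Prop) (n : nat) : R -> Prop :=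
  iter n (ideal_mul I) (fun _ => True).

Definition var_ideal (i j : 'I_4) : R -> Prop :=
  ideal_gen (fun p => p = 'X_i \/ p = 'X_j).

Record curve := Curve { a1 : nat; a2 : nat; a3 : nat; a4 : nat; a5 : nat; a6 : nat }.

Definition va : 'I_4 := inord 0.
Definition vb : 'I_4 := inord 1.
Definition vc : 'I_4 := inord 2.
Definition vd : 'I_4 := inord 3.

Definition tet_ideal (C : curve) : R -> Prop := fun p =>
  ideal_pow (var_ideal va vb) (a1 C) p /\
  ideal_pow (var_ideal va vc) (a2 C) p /\
  ideal_pow (var_ideal va vd) (a3 C) p /\
  ideal_pow (var_ideal vb vc) (a4 C) p /\
  ideal_pow (var_ideal vb vd) (a5 C) p /\
  ideal_pow (var_ideal vc vd) (a6 C) p.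

Definition nontrivial (C : curve) : Prop :=
  ~ (a1 C = 0%N /\ a2 C = 0%N /\ a3 C = 0%N /\ a4 C = 0%N /\ a5 C = 0%N /\ a6 C = 0%N).

(* facets {a1,a2,a3}, {a1,a4,a5}, {a2,a4,a6}, {a3,a5,a6} *)
Inductive facet := FA | FB | FC | FD.

Definition weight (C : curve) (f : facet) : nat :=
  match f with
  | FA => a1 C + a2 C + a3 C
  | FB => a1 C + a4 C + a5 C
  | FC => a2 C + a4 C + a6 C
  | FD => a3 C + a5 C + a6 C
  end.

Definition red_cond (C : curve) (f : facet) : Prop :=
  match f with
  | FA => [/\ a4 C <= a1 C + a2 C, a5 C <= a1 C + a3 C & a6 C <= a2 C + a3 C]%N
  | FB => [/\ a2 C <= a1 C + a4 C, a3 C <= a1 C + a5 C & a6 C <= a4 C + a5 C]%N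
  | FC => [/\ a1 C <= a2 C + a4 C, a3 C <= a2 C + a6 C & a5 C <= a4 C + a6 C]%N
  | FD => [/\ a1 C <= a3 C + a5 C, a2 C <= a3 C + a6 C & a4 C <= a5 C + a6 C]%N
  end.

Definition red_L (f : facet) : R :=
  match f with FA => 'X_va | FB => 'X_vb | FC => 'X_vc | FD => 'X_vd end.

Definition red_F (C : curve) (f : facet) : R :=
  match f with
  | FA => 'X_vb ^+ a1 C * 'X_vc ^+ a2 C * 'X_vd ^+ a3 C
  | FB => 'X_va ^+ a1 C * 'X_vc ^+ a4 C * 'X_vd ^+ a5 C
  | FC => 'X_va ^+ a2 C * 'X_vb ^+ a4 C * 'X_vd ^+ a6 C
  | FD => 'X_va ^+ a3 C * 'X_vb ^+ a5 C * 'X_vc ^+ a6 C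
  end.

(* the curve whose ideal is I;  a_i' = max{0, a_i - 1} = a_i.-1 *)
Definition red_I (C : curve) (f : facet) : curve :=
  match f with
  | FA => Curve (a1 C).-1 (a2 C).-1 (a3 C).-1 (a4 C) (a5 C) (a6 C)
  | FB => Curve (a1 C).-1 (a2 C) (a3 C) (a4 C).-1 (a5 C).-1 (a6 C)
  | FC => Curve (a1 C) (a2 C).-1 (a3 C) (a4 C).-1 (a5 C) (a6 C).-1
  | FD => Curve (a1 C) (a2 C) (a3 C).-1 (a4 C) (a5 C).-1 (a6 C).-1
  end.

Definition special (C : curve) : Prop :=
  exists (s : 'S_4) (r : nat),
    forall p : R, tet_ideal C p <-> tet_ideal (Curve 0 r r r r 0) (msym s p).

(* A graded free module F_i = (+)_{j < rk i} R(-sh i j); elements are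
   column vectors.  aug : F_0 -> R is the row of generators, and
   dif i : F_(i+1) -> F_i is a matrix acting on column vectors.        *)

Record gres := GRes {
  rk  : nat -> nat;
  sh  : forall i, 'I_(rk i) -> nat;
  aug : 'rV[R]_(rk 0);
  dif : forall i, 'M[R]_(rk i, rk i.+1) }.
Arguments rk g i : clear implicits.
Arguments sh g i j : clear implicits.
Arguments aug g : clear implicits.
Arguments dif g i : clear implicits.

(* p is a degree-preserving entry from R(-t) to R(-s) *)
Definition gr_entry (p : R) (s t : nat) : Prop :=
  if (s <= t)%N then p \is (t - s)%N.-homog else p == 0.

Definition is_graded (G : gres) : Prop :=
  (forall j, gr_entry (aug G 0 j) 0 (sh G 0 j)) /\
  (forall i a b, gr_entry (dif G i a b) (sh G i a) (sh G i.+1 b)).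

Definition is_resolution (I : R -> Prop) (G : gres) : Prop :=
  [/\ (forall p, I p <-> exists v : 'cV[R]_(rk G 0), p = (aug G *m v) 0 0),
      (forall v : 'cV[R]_(rk G 0), aug G *m v = 0 <-> exists w, v = dif G 0 *m w) &
      (forall i (v : 'cV[R]_(rk G i.+1)),
          dif G i *m v = 0 <-> exists w, v = dif G i.+1 *m w)].

(* minimality: all differentials have entries in the maximal ideal
   (a,b,c,d), i.e. with zero constant term *)
Definition is_minimal (G : gres) : Prop :=
  forall i a b, (dif G i a b)@_0%MM = 0.

Definition is_min_free_res (I : R -> Prop) (G : gres) : Prop :=
  [/\ is_graded G, is_resolution I G & is_minimal G].

(* The mapping cone resolution of J = L*I + (F) from
     0 -> R(-e-1) -> I(-1) (+) R(-e) -> J -> 0,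
   C |-> (F C, L C),  (A,B) |-> L A - F B,
   given a graded free resolution G of I and a lift c : R(-e-1) -> F_0(-1)
   of C |-> F C (i.e. aug G *m c = F).                                   *)

Section Cone.
Variables (G : gres) (L F : R) (e : nat) (c : 'cV[R]_(rk G 0)).

Definition cone_rk (i : nat) : nat :=
  match i with
  | 0 => (rk G 0 + 1)%N
  | 1 => (rk G 1 + 1)%N
  | n => rk G n
  end.

Definition cone_sh (i : nat) : 'I_(cone_rk i) -> nat :=
  match i return 'I_(cone_rk i) -> nat with
  | 0 => fun j => match split j with inl j' => (sh G 0 j').+1 | inr _ => e end
  | 1 => fun j => match split j with inl j' => (sh G 1 j').+1 | inr _ => e.+1 end
  | n.+2 => fun j => (sh G n.+2 j).+1
  end.

Definition cone_aug : 'rV[R]_(cone_rk 0) :=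
  row_mx (L *: aug G) (- (F%:M : 'M[R]_1)).

Definition cone_dif (i : nat) : 'M[R]_(cone_rk i, cone_rk i.+1) :=
  match i return 'M[R]_(cone_rk i, cone_rk i.+1) with
  | 0 => block_mx (dif G 0) c 0 (L%:M : 'M[R]_1)
  | 1 => col_mx (dif G 1) 0
  | n.+2 => dif G n.+2
  end.

Definition cone : gres := GRes cone_sh cone_aug cone_dif.
End Cone.

End Tetra.
Arguments rk {k} g i.
Arguments sh {k} g i j.
Arguments aug {k} g.
Arguments dif {k} g i.
Arguments tet_ideal : clear implicits.
Arguments red_F k C f.
Arguments red_L k f.
Arguments special k C.
Arguments cone {k} G L F e c.
Arguments is_min_free_res {k} I G.
Arguments gr_entry {k} p s t.

(* Main.v *)
Require Import Defs.
From HB Require Import structures.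
From mathcomp Require Import all_boot all_order all_algebra all_fingroup.
From mathcomp Require Import mpoly.
From mathcomp Require Import zify ring.
Import GRing.Theory.
Local Open Scope ring_scope.

Section Basic.
Variable k : fieldType.
Local Notation R := {mpoly k[4]}.
Implicit Types p q : R.

Lemma supp_add p q m : (p+q)@_m != 0 -> p@_m != 0 \/ q@_m != 0.
Proof.
rewrite mcoeffD; case: (eqVneq (p@_m) 0) => [->|]; last by left.
by rewrite add0r; right.
Qed.

Lemma supp_opp p m : (- p)@_m != 0 -> p@_m != 0.
Proof. by rewrite mcoeffN oppr_eq0. Qed.

Lemma supp_scale (c : k) p m : (c *: p)@_m != 0 -> p@_m != 0.
Proof. by rewrite mcoeffZ; apply: contra => /eqP ->; rewrite mulr0. Qed.

Lemma supp_mul p q m : (p*q)@_m != 0 ->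
  exists k1 k2, m = (k1+k2)%MM /\ p@_k1 != 0 /\ q@_k2 != 0.
Proof.
rewrite mcoeffM => H.
case: (pickP (fun kk : 'X_{1..4 < (mdeg m).+1, (mdeg m).+1} =>
   (m == kk.1 + kk.2)%MM && (p@_kk.1 * q@_kk.2 != 0))) => [[k1 k2] /andP [/eqP E nz] | H0].
  exists k1, k2; split => //.
  by move: nz; rewrite mulf_eq0 negb_or => /andP.
move: H; rewrite big1 ?eqxx // => kk Hk.
by have := H0 kk; rewrite Hk /= => /negbFE/eqP.
Qed.

Lemma supp_X m m' : ('X_[m] : R)@_m' != 0 -> m' = m.
Proof. rewrite mcoeffX; case: (eqVneq m m') => [->//|_]; by rewrite mulr0n eqxx. Qed.

Lemma supp_Xi (i : 'I_4) m' : ('X_i : R)@_m' != 0 -> m' = U_(i)%MM.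
Proof. exact: supp_X. Qed.

Lemma X_coeff m : ('X_[m] : R)@_m != 0.
Proof. by rewrite mcoeffX eqxx oner_neq0. Qed.

Lemma ideal_gen_ind (S Q : R -> Prop) :
  Q 0 -> (forall x y, Q x -> Q y -> Q (x+y)) -> (forall r x, Q x -> Q (r*x)) ->
  (forall x, S x -> Q x) -> forall p, ideal_gen S p -> Q p.
Proof.
move=> Q0 QD QM QS p [n [g [c [Hg ->]]]].
by apply: (big_ind Q) => // i _; apply: QM; apply: QS.
Qed.

Lemma ideal_gen_sub (S : R -> Prop) p : S p -> ideal_gen S p.
Proof.
move=> Sp; exists 1%N, (fun _ => p), (fun _ => 1); split => //.
by rewrite big_ord1 mul1r.
Qed.

Lemma ideal_gen_0 (S : R -> Prop) : ideal_gen S 0.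
Proof. by exists 0%N, (fun _ => 0), (fun _ => 0); split => [[]|]; rewrite // big_ord0. Qed.

Lemma ideal_gen_add (S : R -> Prop) p q : ideal_gen S p -> ideal_gen S q -> ideal_gen S (p + q).
Proof.
move=> [n1 [g1 [c1 [H1 ->]]]] [n2 [g2 [c2 [H2 ->]]]].
exists (n1 + n2)%N, (fun i => match split i with inl a => g1 a | inr b => g2 b end),
  (fun i => match split i with inl a => c1 a | inr b => c2 b end); split.
  by move=> i; case: (split i).
rewrite big_split_ord /=; congr (_ + _); apply: eq_bigr => i _.
  by rewrite (unsplitK (inl _ i)).
by rewrite (unsplitK (inr _ i)).
Qed.

Lemma ideal_gen_mul (S : R -> Prop) r p : ideal_gen S p -> ideal_gen S (r * p).
Proof.
move=> [n [g [c [H ->]]]]; exists n, g, (fun i => r * c i); split => //.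
by rewrite mulr_sumr; apply: eq_bigr => i _; rewrite mulrA.
Qed.

Lemma pow_0 (I : R -> Prop) n : ideal_pow I n 0.
Proof. by case: n => [|n] //=; apply: ideal_gen_0. Qed.
Lemma pow_add (I : R -> Prop) n p q : ideal_pow I n p -> ideal_pow I n q -> ideal_pow I n (p + q).
Proof. by case: n => [|n] //=; apply: ideal_gen_add. Qed.
Lemma pow_mul (I : R -> Prop) n r p : ideal_pow I n p -> ideal_pow I n (r * p).
Proof. by case: n => [|n] //=; apply: ideal_gen_mul. Qed.

Definition geq_pair (i j : 'I_4) n p := forall m : 'X_{1..4}, p@_m != 0 -> (n <= m i + m j)%N.

Lemma X_pow (i j : 'I_4) n (m : 'X_{1..4}) : i != j -> (n <= m i + m j)%N ->
  ideal_pow (var_ideal i j) n ('X_[m] : R).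
Proof.
move=> ij; elim: n m => [|n IH] m H //=.
have [mi|mi0] := posnP (m i).
  have le : (U_(j) <= m)%MM.
    apply/mnm_lepP => l; rewrite mnm1E; case: eqP => [<-|] /=; lia.
  rewrite -(submK le) mpolyXD mulrC; apply: ideal_gen_sub.
  exists 'X_j, 'X_[m - U_(j)]; split; first by apply: ideal_gen_sub; right.
  split => //; apply: IH; rewrite !mnmBE !mnm1E eqxx eq_sym (negbTE ij); lia.
have le : (U_(i) <= m)%MM.
  apply/mnm_lepP => l; rewrite mnm1E; case: eqP => [<-|] /=; lia.
rewrite -(submK le) mpolyXD mulrC; apply: ideal_gen_sub.
exists 'X_i, 'X_[m - U_(i)]; split; first by apply: ideal_gen_sub; left.
split => //; apply: IH; rewrite !mnmBE !mnm1E eqxx (negbTE ij); lia.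
Qed.

Lemma geq_pow (i j : 'I_4) n p : i != j -> geq_pair i j n p -> ideal_pow (var_ideal i j) n p.
Proof.
move=> ij H; rewrite (mpolyE p) big_seq.
apply: (big_ind (ideal_pow (var_ideal i j) n)); first exact: pow_0.
  exact: pow_add.
move=> m; rewrite mcoeff_msupp => /H nm.
rewrite -mul_mpolyC; apply: pow_mul; exact: X_pow.
Qed.

Lemma pow_geq (i j : 'I_4) n p : ideal_pow (var_ideal i j) n p -> geq_pair i j n p.
Proof.
elim: n p => [|n IH] p /=; first by move=> _ m.
apply: ideal_gen_ind.
- by move=> m; rewrite mcoeff0 eqxx.
- by move=> x y Hx Hy m /supp_add [/Hx|/Hy].
- move=> r x Hx m /supp_mul [k1 [k2 [-> [_ /Hx]]]]; rewrite !mnmDE; lia.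
move=> x [y [z [Hy [Hz ->]]]] m /supp_mul [k1 [k2 [-> [H1 H2]]]].
have {H2} := IH _ Hz _ H2.
have : geq_pair i j 1 y.
  move: Hy; apply: ideal_gen_ind.
  - by move=> m'; rewrite mcoeff0 eqxx.
  - by move=> x' y' Hx Hy' m' /supp_add [/Hx|/Hy'].
  - move=> r x' Hx m' /supp_mul [l1 [l2 [-> [_ /Hx]]]]; rewrite !mnmDE; lia.
  move=> x' [->|->] m' /supp_Xi -> ; rewrite !mnm1E eqxx //=; lia.
move=> /(_ _ H1); rewrite !mnmDE; lia.
Qed.

End Basic.


Section Div.
Variable k : fieldType.
Local Notation R := {mpoly k[4]}.
Implicit Types p q : R.

Definition supp_in (P : 'X_{1..4} -> Prop) p := forall m, p@_m != 0 -> P m.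

Lemma supp_in_sum P (I : Type) (r : seq I) (Q : pred I) (F : I -> R) :
  (forall i, Q i -> supp_in P (F i)) -> supp_in P (\sum_(i <- r | Q i) F i).
Proof.
move=> H; apply: (big_ind (supp_in P)) => //.
  by move=> m; rewrite mcoeff0 eqxx.
by move=> x y Hx Hy m /supp_add [/Hx|/Hy].
Qed.

Lemma supp_in_0 P p : supp_in P p -> (forall m, ~ P m) -> p = 0.
Proof.
move=> H N; apply/mpolyP => m; rewrite mcoeff0.
by apply/eqP; apply/negP => /negP /H /N.
Qed.

Lemma divX (v : 'I_4) (mF : 'X_{1..4}) (A s : R) :
  mF v = 0%N -> 'X_v * A = 'X_[mF] * s -> exists t, s = 'X_v * t.
Proof.
move=> mFv E.
pose s0 := \sum_(m <- msupp s | m v == 0%N) s@_m *: ('X_[m] : R).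
pose s1 := \sum_(m <- msupp s | m v != 0%N) s@_m *: ('X_[m - U_(v)] : R).
have es : s = s0 + 'X_v * s1.
  rewrite {1}(mpolyE s) (bigID (fun m : 'X_{1..4} => m v == 0%N)) /=; congr (_ + _).
  rewrite mulr_sumr; apply: eq_bigr => m mv.
  rewrite -scalerAr -mpolyXD; congr (_ *: 'X_[_]).
  apply/mnmP => l; rewrite !mnmDE mnmBE mnm1E; case: eqP => [<-|]/=; lia.
have s00 : s0 = 0.
  have : 'X_[mF] * s0 = 'X_v * (A - 'X_[mF] * s1).
    have -> : s0 = s - 'X_v * s1 by rewrite es addrK.
    rewrite mulrBr -E; ring.
  move=> E2.
  have Hs0 : supp_in (fun m => m v = 0%N) s0.
    apply: supp_in_sum => m /eqP mv m' /supp_scale /supp_X ->; done.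
  have H1 : supp_in (fun m => m v = 0%N) ('X_[mF] * s0).
    move=> m /supp_mul [k1 [k2 [-> [/supp_X -> /Hs0]]]]; rewrite mnmDE mFv; lia.
  have H2 : supp_in (fun m => 0 < m v)%N ('X_[mF] * s0).
    rewrite E2 => m /supp_mul [k1 [k2 [-> [/supp_Xi -> _]]]]; rewrite mnmDE mnm1E eqxx; lia.
  have : 'X_[mF] * s0 = 0.
    apply: (@supp_in_0 (fun m : 'X_{1..4} => m v = 0%N /\ (0 < m v)%N)); last by move=> m [-> ].
    by move=> m H; split; [apply: H1|apply: H2].
  by move/eqP; rewrite mulf_eq0 => /orP [/eqP X0|/eqP //]; move: (X_coeff k mF); rewrite X0 mcoeff0 eqxx.
by exists s1; rewrite es s00 add0r.
Qed.

End Div.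


Section Cone.
Variable k : fieldType.
Local Notation R := {mpoly k[4]}.
Implicit Types p q : R.

Lemma Xi_neq0 (v : 'I_4) : ('X_v : R) != 0.
Proof. by apply/eqP => H; move: (X_coeff k U_(v)); rewrite H mcoeff0 eqxx. Qed.

Lemma cone_aug_mul (G : gres k) L F (v : 'cV[R]_(rk G 0 + 1)) :
  (cone_aug G L F *m v) 0 0 = L * (aug G *m usubmx v) 0 0 - F * (dsubmx v) 0 0.
Proof.
rewrite -{1}[v]vsubmxK /cone_aug mul_row_col mulNmx mul_scalar_mx -scalemxAl.
by rewrite !mxE.
Qed.

Lemma mx11_eq0 (M : 'M[R]_1) : M 0 0 = 0 -> M = 0.
Proof. move=> H; rewrite [M]mx11_scalar H; apply/matrixP => i j; rewrite !mxE; by case: (i == j). Qed.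

Lemma cone_res (G : gres k) (I J : R -> Prop) (v : 'I_4) (mF : 'X_{1..4}) e c :
  mF v = 0%N ->
  is_resolution I G ->
  (forall p, J p <-> exists q s, I q /\ p = 'X_v * q - 'X_[mF] * s) ->
  aug G *m c = ('X_[mF])%:M ->
  is_resolution J (cone G 'X_v 'X_[mF] e c).
Proof.
move=> mFv [HI H0 HS] HJ Hc; split.
- move=> p; rewrite HJ; split.
    move=> [q [s [/HI [u ->] ->]]].
    exists (col_mx u (s%:M)); rewrite /= cone_aug_mul col_mxKu col_mxKd.
    by congr (_ - _ * _); rewrite mxE eqxx mulr1n.
  move=> [w ->]; rewrite /= cone_aug_mul.
  exists ((aug G *m usubmx w) 0 0), (dsubmx w 0 0); split => //.
  by apply/HI; exists (usubmx w).
- move=> w /=; split.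
    move=> Hw.
    have E : 'X_v * (aug G *m usubmx w) 0 0 = 'X_[mF] * dsubmx w 0 0.
      by apply/eqP; rewrite -subr_eq0 -cone_aug_mul Hw mxE.
    have [t Et] := @divX k v mF _ _ mFv E.
    have E2 : (aug G *m usubmx w) 0 0 = 'X_[mF] * t.
      by apply: (mulfI (Xi_neq0 v)); rewrite E Et mulrCA.
    have : aug G *m (usubmx w - t *: c) = 0.
      apply: mx11_eq0; rewrite mulmxBr -scalemxAr Hc mxE E2.
      rewrite !mxE eqxx mulr1n; ring.
    move/H0 => [w1 Ew1].
    exists (col_mx w1 (t%:M)); rewrite /= mul_block_col mul0mx add0r -scalar_mxM.
    rewrite mul_mx_scalar -Ew1 subrK -{1}[w]vsubmxK; congr col_mx.
    by rewrite [dsubmx w]mx11_scalar Et mulrC.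
  move=> [w' ->]; apply: mx11_eq0; rewrite cone_aug_mul /=.
  rewrite -{1 2}[w']vsubmxK mul_block_col col_mxKu col_mxKd mul0mx add0r.
  rewrite mulmxDr [aug G *m (c *m _)]mulmxA Hc.
  have -> : aug G *m (dif G 0 *m usubmx w') = 0 by apply/H0; exists (usubmx w').
  rewrite add0r !mul_scalar_mx !mxE; ring.
- case => [|[|i]] w /=.
  + split.
      rewrite -{1}[w]vsubmxK mul_block_col mul0mx add0r -col_mx0 => /eq_col_mx [E1 E2].
      have w20 : dsubmx w = 0.
        apply/matrixP => a b; move/matrixP: E2 => /(_ a b).
        rewrite mul_scalar_mx !mxE => /eqP; rewrite mulf_eq0 (negbTE (Xi_neq0 v)) /=.
        by move/eqP.
      move: E1; rewrite w20 mulmx0 addr0 => /(HS 0%N) [w1 Ew1].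
      exists w1; rewrite mul_col_mx mul0mx -Ew1 -w20; exact: esym (vsubmxK w).
    move=> [w1 ->]; rewrite [col_mx (dif G 1) 0 *m w1]mul_col_mx mul_block_col !mul0mx !mulmx0 !addr0.
    have -> : dif G 0 *m (dif G 1 *m w1) = 0 by apply/(HS 0%N); exists w1.
    by rewrite col_mx0.
  + rewrite mul_col_mx mul0mx -col_mx0; split.
      by move=> /eq_col_mx [/(HS 1%N) ? _].
    by move=> /(HS 1%N) ->.
  + exact: HS.
Qed.

End Cone.

Section Graded.
Variable k : fieldType.
Local Notation R := {mpoly k[4]}.

Lemma gr_shift (p : R) s t : gr_entry p s.+1 t.+1 <-> gr_entry p s t.
Proof. by rewrite /gr_entry ltnS subSS. Qed.

Lemma gr_zero s t : gr_entry (0 : R) s t.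
Proof. by rewrite /gr_entry; case: ifP => _ //; apply: rpred0. Qed.

Lemma gr_0 (p : R) t : gr_entry p 0 t <-> p \is t.-homog.
Proof. by rewrite /gr_entry leq0n subn0. Qed.

Lemma Xi_homog (v : 'I_4) : ('X_v : R) \is 1.-homog.
Proof. rewrite dhomogX; apply/eqP; exact: mdeg1. Qed.

Lemma cone_graded (G : gres k) (v : 'I_4) (F : R) e (c : 'cV[R]_(rk G 0)) :
  is_graded G -> (forall j, gr_entry (c j 0) (sh G 0 j) e) -> F \is e.-homog ->
  is_graded (cone G 'X_v F e c).
Proof.
move=> [Ha Hd] Hc HF; split.
  move=> j /=; case: splitP => j' Ej; [have -> : j = lshift _ j' by apply: val_inj|
                                         have -> : j = rshift _ j' by apply: val_inj].
  + rewrite row_mxEl mxE; apply/gr_0; rewrite -[(sh G 0 j').+1]add1n; apply: dhomogM; first exact: Xi_homog.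
    by apply/gr_0/Ha.
  + rewrite row_mxEr ord1 !mxE eqxx mulr1n; apply/gr_0; by rewrite dhomogN.
case => [|[|i]] a b /=.
- case: splitP => a' Ea; [have -> : a = lshift _ a' by apply: val_inj|
                          have -> : a = rshift _ a' by apply: val_inj];
  case: splitP => b' Eb; (have -> : b = lshift _ b' by apply: val_inj) ||
                          (have -> : b = rshift _ b' by apply: val_inj).
  + by rewrite block_mxEul; apply/gr_shift/Hd.
  + by rewrite block_mxEur ord1; apply/gr_shift/Hc.
  + by rewrite block_mxEdl mxE; apply: gr_zero.
  + rewrite block_mxEdr !ord1 mxE eqxx mulr1n /gr_entry leqnSn subSn // subnn.
    exact: Xi_homog.
- case: splitP => a' Ea; [have -> : a = lshift _ a' by apply: val_inj|
                          have -> : a = rshift _ a' by apply: val_inj].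
  + by rewrite col_mxEu; apply/gr_shift/Hd.
  + by rewrite col_mxEd mxE; apply: gr_zero.
- by apply/gr_shift/Hd.
Qed.

Lemma cone_minimal (G : gres k) (v : 'I_4) (F : R) e (c : 'cV[R]_(rk G 0)) :
  is_minimal G ->
  (is_minimal (cone G 'X_v F e c) <-> forall j, (c j 0)@_0 = 0).
Proof.
move=> HG; split.
  by move=> H j; have := H 0%N (lshift _ j) (rshift _ 0); rewrite /= block_mxEur.
move=> Hc; case => [|[|i]] a b /=.
- case: (splitP a) => a' Ea; [have -> : a = lshift _ a' by apply: val_inj|
                          have -> : a = rshift _ a' by apply: val_inj];
  case: (splitP b) => b' Eb; (have -> : b = lshift _ b' by apply: val_inj) ||
                          (have -> : b = rshift _ b' by apply: val_inj).
  + by rewrite block_mxEul.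
  + by rewrite block_mxEur ord1.
  + by rewrite block_mxEdl mxE mcoeff0.
  + rewrite block_mxEdr !ord1 mxE eqxx mulr1n mcoeffX.
    by case: eqP => // /mnmP /(_ v); rewrite mnm1E mnm0E eqxx.
- case: (splitP a) => a' Ea; [have -> : a = lshift _ a' by apply: val_inj|
                          have -> : a = rshift _ a' by apply: val_inj].
  + by rewrite col_mxEu.
  + by rewrite col_mxEd mxE mcoeff0.
- exact: HG.
Qed.

End Graded.


Lemma vaE : nat_of_ord va = 0%N. Proof. by rewrite /va inordK. Qed.
Lemma vbE : nat_of_ord vb = 1%N. Proof. by rewrite /vb inordK. Qed.
Lemma vcE : nat_of_ord vc = 2%N. Proof. by rewrite /vc inordK. Qed.
Lemma vdE : nat_of_ord vd = 3%N. Proof. by rewrite /vd inordK. Qed.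

Lemma veqs : [/\ (va == vb) = false, (va == vc) = false, (va == vd) = false,
   (vb == vc) = false & [/\ (vb == vd) = false, (vc == vd) = false,
   (vb == va) = false, (vc == va) = false & [/\ (vd == va) = false,
   (vc == vb) = false, (vd == vb) = false & (vd == vc) = false]]].
Proof.
by rewrite -!val_eqE /= vaE vbE vcE vdE.
Qed.

Lemma vab : (va == vb) = false. Proof. by case: veqs. Qed.
Lemma vac : (va == vc) = false. Proof. by case: veqs. Qed.
Lemma vad : (va == vd) = false. Proof. by case: veqs. Qed.
Lemma vbc : (vb == vc) = false. Proof. by case: veqs. Qed.
Lemma vbd : (vb == vd) = false. Proof. by case: veqs => _ _ _ _ []. Qed.
Lemma vcd : (vc == vd) = false. Proof. by case: veqs => _ _ _ _ []. Qed.
Lemma vba : (vb == va) = false. Proof. by rewrite eq_sym vab. Qed.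
Lemma vca : (vc == va) = false. Proof. by rewrite eq_sym vac. Qed.
Lemma vda : (vd == va) = false. Proof. by rewrite eq_sym vad. Qed.
Lemma vcb : (vc == vb) = false. Proof. by rewrite eq_sym vbc. Qed.
Lemma vdb : (vd == vb) = false. Proof. by rewrite eq_sym vbd. Qed.
Lemma vdc : (vd == vc) = false. Proof. by rewrite eq_sym vcd. Qed.

Lemma ord4 (i : 'I_4) : i = va \/ i = vb \/ i = vc \/ i = vd.
Proof.
case: i => [[|[|[|[|n]]]] Hi] //.
- by left; apply: val_inj; rewrite /= vaE.
- by right; left; apply: val_inj; rewrite /= vbE.
- by right; right; left; apply: val_inj; rewrite /= vcE.
- by right; right; right; apply: val_inj; rewrite /= vdE.
Qed.

Definition mk4 (x y z w : nat) : 'X_{1..4} :=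
  [multinom (nth 0%N [:: x; y; z; w] (nat_of_ord i)) | i < 4].

Lemma mk4a x y z w : mk4 x y z w va = x. Proof. by rewrite mnmE vaE. Qed.
Lemma mk4b x y z w : mk4 x y z w vb = y. Proof. by rewrite mnmE vbE. Qed.
Lemma mk4c x y z w : mk4 x y z w vc = z. Proof. by rewrite mnmE vcE. Qed.
Lemma mk4d x y z w : mk4 x y z w vd = w. Proof. by rewrite mnmE vdE. Qed.

Ltac simp4 := rewrite ?mnmDE ?mnmBE ?mulmnE ?mnm1E ?mnm0E ?mk4a ?mk4b ?mk4c ?mk4d
  ?eqxx ?vab ?vac ?vad ?vbc ?vbd ?vcd ?vba ?vca ?vda ?vcb ?vdb ?vdc /=.

Lemma mnm4P (m1 m2 : 'X_{1..4}) :
  m1 va = m2 va -> m1 vb = m2 vb -> m1 vc = m2 vc -> m1 vd = m2 vd -> m1 = m2.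
Proof.
move=> Ha Hb Hc Hd; apply/mnmP => i.
by case: (ord4 i) => [->|[->|[->|->]]].
Qed.

Lemma lepm4 (m1 m2 : 'X_{1..4}) :
  (m1 <= m2)%MM = [&& (m1 va <= m2 va)%N, (m1 vb <= m2 vb)%N, (m1 vc <= m2 vc)%N & (m1 vd <= m2 vd)%N].
Proof.
apply/mnm_lepP/idP.
  by move=> H; rewrite !H.
by move=> /and4P [Ha Hb Hc Hd] i; case: (ord4 i) => [->|[->|[->|->]]].
Qed.

Definition monoN (a1 a2 a3 a4 a5 a6 x y z w : nat) : Prop :=
  (a1 <= x + y /\ a2 <= x + z /\ a3 <= x + w /\ a4 <= y + z /\ a5 <= y + w /\ a6 <= z + w)%N.

Definition mono_in (C : curve) (m : 'X_{1..4}) : Prop :=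
  monoN (a1 C) (a2 C) (a3 C) (a4 C) (a5 C) (a6 C) (m va) (m vb) (m vc) (m vd).

Arguments supp_in {k} P p.

Section Tet.
Variable k : fieldType.
Local Notation R := {mpoly k[4]}.

Lemma tet_char C (p : R) : tet_ideal k C p <-> supp_in (mono_in C) p.
Proof.
split.
  move=> [/pow_geq H1 [/pow_geq H2 [/pow_geq H3 [/pow_geq H4 [/pow_geq H5 /pow_geq H6]]]]] m nz.
  by rewrite /mono_in /monoN; split; [|split; [|split; [|split; [|split]]]];
    [exact: H1|exact: H2|exact: H3|exact: H4|exact: H5|exact: H6].
move=> H; split; [|split; [|split; [|split; [|split]]]]; apply: geq_pow;
  rewrite ?vab ?vac ?vad ?vbc ?vbd ?vcd //; move=> m /H; rewrite /mono_in /monoN; lia.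
Qed.

Lemma supp_in_X P (m : 'X_{1..4}) : supp_in P ('X_[m] : R) <-> P m.
Proof.
split; first by move/(_ m (X_coeff k m)).
by move=> Pm m' /supp_X ->.
Qed.

End Tet.


Definition mF (C : curve) (f : facet) : 'X_{1..4} :=
  match f with
  | FA => mk4 0 (a1 C) (a2 C) (a3 C)
  | FB => mk4 (a1 C) 0 (a4 C) (a5 C)
  | FC => mk4 (a2 C) (a4 C) 0 (a6 C)
  | FD => mk4 (a3 C) (a5 C) (a6 C) 0
  end.

Definition Lv (f : facet) : 'I_4 :=
  match f with FA => va | FB => vb | FC => vc | FD => vd end.

Lemma mF_Lv C f : mF C f (Lv f) = 0%N.
Proof. by case: f => /=; simp4. Qed.

Lemma mF_deg C f : mdeg (mF C f) = weight C f.
Proof.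
by case: f; rewrite /= mdegE !big_ord_recl big_ord0 !mnmE /=; lia.
Qed.

Section Red.
Variable k : fieldType.
Local Notation R := {mpoly k[4]}.

Lemma red_LE f : red_L k f = 'X_(Lv f).
Proof. by case: f. Qed.

Lemma red_FE C f : red_F k C f = 'X_[mF C f].
Proof.
case: f => /=; rewrite !mpolyXn -!mpolyXD; congr 'X_[_]; apply: mnm4P; simp4; lia.
Qed.
End Red.

Definition SFb (a1 a2 a3 a4 a5 a6 : nat) : Prop :=
  (a1 = 0 /\ a6 = 0 /\ a2 = a3 /\ a3 = a4 /\ a4 = a5 /\ 0 < a2)%N \/
  (a2 = 0 /\ a5 = 0 /\ a1 = a3 /\ a3 = a4 /\ a4 = a6 /\ 0 < a1)%N \/
  (a3 = 0 /\ a4 = 0 /\ a1 = a2 /\ a2 = a5 /\ a5 = a6 /\ 0 < a1)%N.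

Definition SFc (C : curve) := SFb (a1 C) (a2 C) (a3 C) (a4 C) (a5 C) (a6 C).

Lemma ARI1 C f k2 : mono_in (red_I C f) k2 -> mono_in C (U_(Lv f) + k2)%MM.
Proof. by case: C => a1 a2 a3 a4 a5 a6; case: f; rewrite /mono_in /monoN /=; simp4; lia. Qed.

Lemma ARI2 C f k2 : red_cond C f -> mono_in C (mF C f + k2)%MM.
Proof. by case: C => a1 a2 a3 a4 a5 a6; case: f; rewrite /mono_in /monoN /=; simp4; move=> [] /=; lia. Qed.

Lemma ARI3 C f m : mono_in C m -> ~~ (mF C f <= m)%MM ->
  (U_(Lv f) <= m)%MM /\ mono_in (red_I C f) (m - U_(Lv f))%MM.
Proof.
rewrite !lepm4; case: C => a1 a2 a3 a4 a5 a6; case: f; rewrite /mono_in /monoN /=; simp4; lia.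
Qed.

Lemma ArithA C f m2 : SFc C -> red_cond C f -> (forall g, weight C g <= weight C f)%N ->
  mono_in (red_I C f) m2 -> (m2 <= mF C f)%MM -> m2 = mF C f.
Proof.
move=> S Rc W; have W1 := W FA; have W2 := W FB; have W3 := W FC; have W4 := W FD; clear W.
rewrite lepm4 => M L.
suff : m2 va = mF C f va /\ m2 vb = mF C f vb /\ m2 vc = mF C f vc /\ m2 vd = mF C f vd.
  by case=> ? [? [? ?]]; apply: mnm4P.
move: S Rc W1 W2 W3 W4 M L.
case: C => a1 a2 a3 a4 a5 a6; case: f; rewrite /SFc /SFb /mono_in /monoN /=; simp4; move=> S [] /=; lia.
Qed.

Section Cores.
Local Ltac core4 x1 x2 x3 y1 y2 y3 z1 z2 z3 :=
  let S := fresh "S" in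
  move=> S NT R1 R2 R3 W1 W2 W3 W4; move: S;
  (have [e1|e1] : (y1 < z1 \/ y1 = z1)%N by lia);
  (have [e2|e2] : (y2 < z2 \/ y2 = z2)%N by lia);
  (have [e3|e3] : (y3 < z3 \/ y3 = z3)%N by lia);
  (have [f1|f1] : (x1 = 0 \/ 1 <= x1)%N by lia);
  (have [f2|f2] : (x2 = 0 \/ 1 <= x2)%N by lia);
  (have [f3|f3] : (x3 = 0 \/ 1 <= x3)%N by lia);
  move=> S;
  first [ (clear S; left; lia) | (clear S; right; left; lia) | (clear S; right; right; lia)
        | (exfalso; apply: S; rewrite /SFb; first [left; lia | right; left; lia | right; right; lia]) ].
Lemma coreA a1 a2 a3 a4 a5 a6 : ~ SFb a1 a2 a3 a4 a5 a6 -> (0 < a1 + a2 + a3 + a4 + a5 + a6)%N ->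
  (a4 <= a1 + a2 -> a5 <= a1 + a3 -> a6 <= a2 + a3 ->
  a1 + a2 + a3 <= a1 + a2 + a3 -> a1 + a4 + a5 <= a1 + a2 + a3 -> a2 + a4 + a6 <= a1 + a2 + a3 -> a3 + a5 + a6 <= a1 + a2 + a3 ->
  (1 <= a1 /\ a4 < a1 + a2 /\ a5 < a1 + a3) \/ (1 <= a2 /\ a4 < a1 + a2 /\ a6 < a2 + a3) \/
  (1 <= a3 /\ a5 < a1 + a3 /\ a6 < a2 + a3))%N.
Proof. core4 a1 a2 a3 a4 a5 a6 (a1 + a2) (a1 + a3) (a2 + a3). Qed.
Lemma coreB a1 a2 a3 a4 a5 a6 : ~ SFb a1 a2 a3 a4 a5 a6 -> (0 < a1 + a2 + a3 + a4 + a5 + a6)%N ->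
  (a2 <= a1 + a4 -> a3 <= a1 + a5 -> a6 <= a4 + a5 ->
  a1 + a2 + a3 <= a1 + a4 + a5 -> a1 + a4 + a5 <= a1 + a4 + a5 -> a2 + a4 + a6 <= a1 + a4 + a5 -> a3 + a5 + a6 <= a1 + a4 + a5 ->
  (1 <= a1 /\ a2 < a1 + a4 /\ a3 < a1 + a5) \/ (1 <= a4 /\ a2 < a1 + a4 /\ a6 < a4 + a5) \/
  (1 <= a5 /\ a3 < a1 + a5 /\ a6 < a4 + a5))%N.
Proof. core4 a1 a4 a5 a2 a3 a6 (a1 + a4) (a1 + a5) (a4 + a5). Qed.
Lemma coreC a1 a2 a3 a4 a5 a6 : ~ SFb a1 a2 a3 a4 a5 a6 -> (0 < a1 + a2 + a3 + a4 + a5 + a6)%N ->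
  (a1 <= a2 + a4 -> a3 <= a2 + a6 -> a5 <= a4 + a6 ->
  a1 + a2 + a3 <= a2 + a4 + a6 -> a1 + a4 + a5 <= a2 + a4 + a6 -> a2 + a4 + a6 <= a2 + a4 + a6 -> a3 + a5 + a6 <= a2 + a4 + a6 ->
  (1 <= a2 /\ a1 < a2 + a4 /\ a3 < a2 + a6) \/ (1 <= a4 /\ a1 < a2 + a4 /\ a5 < a4 + a6) \/
  (1 <= a6 /\ a3 < a2 + a6 /\ a5 < a4 + a6))%N.
Proof. core4 a2 a4 a6 a1 a3 a5 (a2 + a4) (a2 + a6) (a4 + a6). Qed.
Lemma coreD a1 a2 a3 a4 a5 a6 : ~ SFb a1 a2 a3 a4 a5 a6 -> (0 < a1 + a2 + a3 + a4 + a5 + a6)%N ->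
  (a1 <= a3 + a5 -> a2 <= a3 + a6 -> a4 <= a5 + a6 ->
  a1 + a2 + a3 <= a3 + a5 + a6 -> a1 + a4 + a5 <= a3 + a5 + a6 -> a2 + a4 + a6 <= a3 + a5 + a6 -> a3 + a5 + a6 <= a3 + a5 + a6 ->
  (1 <= a3 /\ a1 < a3 + a5 /\ a2 < a3 + a6) \/ (1 <= a5 /\ a1 < a3 + a5 /\ a4 < a5 + a6) \/
  (1 <= a6 /\ a2 < a3 + a6 /\ a4 < a5 + a6))%N.
Proof. core4 a3 a5 a6 a1 a2 a4 (a3 + a5) (a3 + a6) (a5 + a6). Qed.
End Cores.

Lemma ArithB C f : ~ SFc C -> nontrivial C -> red_cond C f ->
  (forall g, weight C g <= weight C f)%N ->
  exists v, (U_(v) <= mF C f)%MM /\ mono_in (red_I C f) (mF C f - U_(v))%MM.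
Proof.
move=> S NT Rc W; have W1 := W FA; have W2 := W FB; have W3 := W FC; have W4 := W FD; clear W.
have {}NT : (0 < a1 C + a2 C + a3 C + a4 C + a5 C + a6 C)%N by move: NT; rewrite /nontrivial; lia.
move: S NT Rc W1 W2 W3 W4.
case: C => a1 a2 a3 a4 a5 a6; case: f; rewrite /SFc /mono_in /monoN /=; move=> S NT [] /= R1 R2 R3 W1 W2 W3 W4.
- case: (@coreA _ _ _ _ _ _ S NT R1 R2 R3 W1 W2 W3 W4) => [H|[H|H]]; [exists vb|exists vc|exists vd];
  rewrite lepm4; simp4; lia.
- case: (@coreB _ _ _ _ _ _ S NT R1 R2 R3 W1 W2 W3 W4) => [H|[H|H]]; [exists va|exists vc|exists vd];
  rewrite lepm4; simp4; lia.
- case: (@coreC _ _ _ _ _ _ S NT R1 R2 R3 W1 W2 W3 W4) => [H|[H|H]]; [exists va|exists vb|exists vd];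
  rewrite lepm4; simp4; lia.
- case: (@coreD _ _ _ _ _ _ S NT R1 R2 R3 W1 W2 W3 W4) => [H|[H|H]]; [exists va|exists vb|exists vc];
  rewrite lepm4; simp4; lia.
Qed.


Definition mperm (m : 'X_{1..4}) (s : 'S_4) : 'X_{1..4} := [multinom m (s i) | i < 4].

Local Open Scope nat_scope.
Definition gE (N i j x : nat) := fun n : nat => if n == i then x else if n == j then 0 else N.

Lemma perm_arith a1 a2 a3 a4 a5 a6 r t0 t1 t2 t3 : (
  [&& t0 < 4, t1 < 4, t2 < 4, t3 < 4 &
  [&& t0 != t1, t0 != t2, t0 != t3, t1 != t2, t1 != t3 & t2 != t3]] ->
  (forall g : nat -> nat, monoN a1 a2 a3 a4 a5 a6 (g 0) (g 1) (g 2) (g 3) <->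
                          monoN 0 r r r r 0 (g t0) (g t1) (g t2) (g t3)) ->
  ~ (a1 = 0 /\ a2 = 0 /\ a3 = 0 /\ a4 = 0 /\ a5 = 0 /\ a6 = 0) ->
  SFb a1 a2 a3 a4 a5 a6)%N.
Proof.
move=> Bt H NT.
have {}NT : 0 < a1 + a2 + a3 + a4 + a5 + a6 by move: NT; lia.
have [N HN] : exists N, a1 <= N /\ a2 <= N /\ a3 <= N /\ a4 <= N /\ a5 <= N /\ a6 <= N /\ r <= N.
  exists (a1 + a2 + a3 + a4 + a5 + a6 + r); lia.
pose RHS i j x := monoN 0 r r r r 0 (gE N i j x t0) (gE N i j x t1) (gE N i j x t2) (gE N i j x t3).
have T : forall i j x, monoN a1 a2 a3 a4 a5 a6 (gE N i j x 0) (gE N i j x 1) (gE N i j x 2) (gE N i j x 3) <-> RHS i j x.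
  by move=> i j x; apply: H.
have E : forall i j a, (forall x, monoN a1 a2 a3 a4 a5 a6 (gE N i j x 0) (gE N i j x 1) (gE N i j x 2) (gE N i j x 3) <-> a <= x) ->
   RHS i j a /\ (RHS i j 0 -> a <= 0) /\ (RHS i j r -> a <= r).
  move=> i j a L; split; first by apply/T/L.
  by split => /T /L.
have := E 0 1 a1 ltac:(move=> x; rewrite /gE /monoN /=; split; [move=> [? [? [? [? [? ?]]]]]; lia | move=> ?; repeat split; lia]).
have := E 0 2 a2 ltac:(move=> x; rewrite /gE /monoN /=; split; [move=> [? [? [? [? [? ?]]]]]; lia | move=> ?; repeat split; lia]).
have := E 0 3 a3 ltac:(move=> x; rewrite /gE /monoN /=; split; [move=> [? [? [? [? [? ?]]]]]; lia | move=> ?; repeat split; lia]).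
have := E 1 2 a4 ltac:(move=> x; rewrite /gE /monoN /=; split; [move=> [? [? [? [? [? ?]]]]]; lia | move=> ?; repeat split; lia]).
have := E 1 3 a5 ltac:(move=> x; rewrite /gE /monoN /=; split; [move=> [? [? [? [? [? ?]]]]]; lia | move=> ?; repeat split; lia]).
have := E 2 3 a6 ltac:(move=> x; rewrite /gE /monoN /=; split; [move=> [? [? [? [? [? ?]]]]]; lia | move=> ?; repeat split; lia]).
clear T E H.
rewrite /RHS; clear RHS; move: t0 t1 t2 t3 Bt.
move=> [|[|[|[|t0]]]] [|[|[|[|t1]]]] [|[|[|[|t2]]]] [|[|[|[|t3]]]] //; rewrite /gE /monoN /= => _.
all: move=> [A1 [Z1 R1]] [A2 [Z2 R2]] [A3 [Z3 R3]] [A4 [Z4 R4]] [A5 [Z5 R5]] [A6 [Z6 R6]].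
all: repeat match goal with h : ?P -> ?Q |- _ =>
   first [ (let q := fresh "q" in have q : Q by apply: h; clear -HN; repeat split; lia); clear h | clear h ] end.
all: repeat match goal with h : _ /\ _ |- _ => destruct h end.
all: rewrite /SFb; first [left; lia | right; left; lia | right; right; lia].
Qed.

Local Open Scope ring_scope.

Section Main.
Variable k : fieldType.
Local Notation R := {mpoly k[4]}.

Lemma JLIF C f : red_cond C f -> forall p : R,
  tet_ideal k C p <-> exists q s, tet_ideal k (red_I C f) q /\ p = 'X_(Lv f) * q - 'X_[mF C f] * s.
Proof.
move=> Rc p; split; last first.
  move=> [q [s [/tet_char Iq ->]]]; apply/tet_char => m /supp_add [].
    by move=> /supp_mul [k1 [k2 [-> [/supp_Xi -> /Iq]]]]; apply: ARI1.
  by move=> /supp_opp /supp_mul [k1 [k2 [-> [/supp_X -> _]]]]; apply: ARI2.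
move/tet_char => H; rewrite (mpolyE p) big_seq.
pose S := fun p : R => exists q s, tet_ideal k (red_I C f) q /\ p = 'X_(Lv f) * q - 'X_[mF C f] * s.
apply: (big_ind S).
- exists 0, 0; split; last by rewrite !mulr0 subr0.
  by apply/tet_char => m; rewrite mcoeff0 eqxx.
- move=> x y [q1 [s1 [/tet_char I1 ->]]] [q2 [s2 [/tet_char I2 ->]]].
  exists (q1 + q2), (s1 + s2); split; last by ring.
  by apply/tet_char => m /supp_add [/I1|/I2].
move=> m; rewrite mcoeff_msupp => /[dup] nz /H Hm.
suff [q [s [/tet_char Iq E]]] : S 'X_[m].
  exists (p@_m *: q), (p@_m *: s); split.
    by apply/tet_char => m' /supp_scale /Iq.
  by rewrite E scalerBr -!scalerAr.
case: (boolP (mF C f <= m)%MM) => le.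
  exists 0, (- 'X_[m - mF C f]); split.
    by apply/tet_char => m'; rewrite mcoeff0 eqxx.
  by rewrite mulr0 sub0r mulrN opprK -mpolyXD addmC submK.
have [le2 HI] := @ARI3 C f m Hm le.
exists 'X_[m - U_(Lv f)], 0; split.
  by apply/tet_char/supp_in_X.
by rewrite mulr0 subr0 -mpolyXD addmC submK.
Qed.

Lemma msym_tet (s : 'S_4) C D :
  (forall m, mono_in C (mperm m s) <-> mono_in D m) ->
  forall p : R, tet_ideal k C p <-> tet_ideal k D (msym s p).
Proof.
move=> HM p; rewrite !tet_char; split.
  by move=> H m; rewrite mcoeff_sym => /H /HM.
move=> H m' nz.
have E : mperm (mperm m' (s^-1)%g) s = m'.
  by apply/mnmP => i; rewrite !mnmE permK.
rewrite -E; apply/HM/H; rewrite mcoeff_sym.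
by rewrite /mperm in E *; rewrite E.
Qed.

Lemma M7 C : SFc C -> special k C.
Proof.
case: C => a1 a2 a3 a4 a5 a6; rewrite /SFc /=.
case=> [[-> [-> [-> [-> [-> _]]]]]|[[-> [-> [-> [-> [-> _]]]]]|[-> [-> [-> [-> [-> _]]]]]]].
- by exists 1%g, a5 => p; rewrite msym1m.
- exists (tperm vb vc), a6; apply: msym_tet => m.
  rewrite /mono_in /monoN /mperm /= !mnmE tpermL tpermR !tpermD ?vba ?vca ?vbd ?vcd //; lia.
- exists (tperm vb vd), a6; apply: msym_tet => m.
  rewrite /mono_in /monoN /mperm /= !mnmE tpermL tpermR !tpermD ?vba ?vda ?vbc ?vdc //; lia.
Qed.


Lemma M6 C : nontrivial C -> special k C -> SFc C.
Proof.
move=> NT [s [r H]].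
have HM : forall m, mono_in C m <-> mono_in (Curve 0 r r r r 0) (mperm m (s^-1)%g).
  move=> m; have := H 'X_[m]; rewrite msymX !tet_char !supp_in_X.
  by rewrite /mperm.
set t := (s^-1)%g in HM.
apply: (@perm_arith _ _ _ _ _ _ r (val (t va)) (val (t vb)) (val (t vc)) (val (t vd))).
- rewrite !ltn_ord !val_eqE !(inj_eq perm_inj) vab vac vad vbc vbd vcd.
  by [].
- move=> g; have := HM [multinom g (nat_of_ord i) | i < 4].
  by rewrite /mono_in /mperm /= !mnmE vaE vbE vcE vdE.
- exact: NT.
Qed.

Lemma addm_neq0 (k1 k2 : 'X_{1..4}) : k1 != 0%MM -> (k1 + k2)%MM != 0%MM.
Proof.
apply: contra => /eqP /mnmP E; apply/eqP/mnmP => i; have := E i.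
rewrite mnmDE !mnm0E; lia.
Qed.

End Main.



Theorem corollary5p8 (k : fieldType) (C : curve) (f : facet) :
  nontrivial C ->
  (forall g : facet, (weight C g <= weight C f)%N) ->
  red_cond C f ->
  forall (G : gres k),
    is_min_free_res (tet_ideal k (red_I C f)) G ->
  forall (c : 'cV[{mpoly k[4]}]_(rk G 0)),
    aug G *m c = (red_F k C f)%:M ->
    (forall j, gr_entry (c j 0) (sh G 0 j) (weight C f)) ->
    (is_min_free_res (tet_ideal k C)
        (cone G (red_L k f) (red_F k C f) (weight C f) c)
     <-> ~ special k C).
Proof.
move=> NT W Rc G [Gg Gr Gm] c Hc Hcg.
rewrite red_LE red_FE in Hc *.
have Hres := @cone_res k G _ _ (Lv f) (mF C f) (weight C f) c (mF_Lv C f) Gr (@JLIF k C f Rc) Hc.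
have HF : ('X_[mF C f] : {mpoly k[4]}) \is (weight C f).-homog.
  by rewrite dhomogX; apply/eqP; exact: mF_deg.
have Hgr := @cone_graded k G (Lv f) _ _ c Gg Hcg HF.
have Hmin := @cone_minimal k G (Lv f) ('X_[mF C f]) (weight C f) c Gm.
move: Gr => [HI H0 HS].
split.
  move=> [_ _ /Hmin H] Sp.
  have SF := @M6 k C NT Sp.
  have E : \sum_j aug G 0 j * c j 0 = 'X_[mF C f].
    by have := congr1 (fun M : 'M[{mpoly k[4]}]_1 => M 0 0) Hc; rewrite !mxE /=.
  have : supp_in (fun m => m != mF C f) (\sum_j aug G 0 j * c j 0).
    apply: supp_in_sum => j _ m /supp_mul [k1 [k2 [-> [nz1 nz2]]]].
    have Ij : tet_ideal k (red_I C f) (aug G 0 j).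
      by apply/HI; exists (delta_mx j 0); rewrite -colE mxE.
    move/tet_char: Ij => /(_ _ nz1) M1.
    apply/eqP => E2.
    have le : (k1 <= mF C f)%MM by apply/mnm_lepP => i; rewrite -E2 mnmDE; lia.
    have E3 := @ArithA C f k1 SF Rc W M1 le.
    have k20 : k2 = 0%MM.
      apply/mnmP => i; move/mnmP: E2 => /(_ i); rewrite E3 mnmDE mnm0E; lia.
    by move: nz2; rewrite k20 H eqxx.
  by rewrite E => /(_ (mF C f) (X_coeff k _)); rewrite eqxx.
move=> NS; split => //; apply/Hmin.
have NSF : ~ SFc C by move/(M7 k).
have [v [le Hv]] := @ArithB C f NSF NT Rc W.
have : tet_ideal k (red_I C f) 'X_[mF C f - U_(v)] by apply/tet_char/supp_in_X.
move/HI => [u Eu].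
have : aug G *m (c - 'X_v *: u) = 0.
  apply: mx11_eq0; rewrite mulmxBr -scalemxAr Hc mxE.
  rewrite [X in _ + X]mxE [X in _ - X]mxE -Eu [X in X + _]mxE eqxx mulr1n.
  by rewrite -mpolyXD addmC submK // subrr.
move/H0 => [w Ew] j.
have Ec : c j 0 = 'X_v * u j 0 + \sum_b dif G 0 j b * w b 0.
  have := congr1 (fun M : 'cV[{mpoly k[4]}]_(rk G 0) => M j 0) Ew; rewrite !mxE => <-; ring.
suff : supp_in (fun m => m != 0%MM) (c j 0).
  by move=> P; apply/eqP; apply/negP => /negP /P; rewrite eqxx.
rewrite Ec => m /supp_add [].
  move=> /supp_mul [k1 [k2 [-> [/supp_Xi -> _]]]]; apply: addm_neq0.
  by apply/eqP => /mnmP /(_ v); rewrite mnm1E mnm0E eqxx.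
move: m; apply: supp_in_sum => b _ m /supp_mul [k1 [k2 [-> [nz1 _]]]].
apply: addm_neq0; apply: contra nz1 => /eqP ->; rewrite Gm.
by [].
Qed.
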